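(* Let $(X,T)$ be a Cantor minimal system and let $\Theta:E(X,T)\to K^0(X,T)$ be the injective homomorphism given by $\Theta(\theta)=\lfloor\theta\rfloor[1_X]+[1_{U_{\{\theta\}}}]$, where for $t\in[0,1)\cap E(X,T)$, $U_t$ is a clopen set with $1_{U_t}-t\mathbf 1$ a real coboundary. Then the quotient group $K^0(X,T)/\Theta(E(X,T))$ is torsion-free.
   Context: A Cantor minimal system is a homeomorphism $T$ of a Cantor set $X$ with all orbits dense. $E(X,T)=\{\theta\in\mathbb R:\exp(2\pi i\theta)\text{ is a continuous eigenvalue of } T\}$, where $\lambda$ is a continuous eigenvalue if $f\circ T=\lambda f$ for some continuous $f:X\to\mathbb S^1$. A real coboundary is $F-F\circ T$ with $F\in C(X,\mathbb R)$; such clopen sets $U_t$ exist ($U_0=\emptyset$), and $\Theta$ does not depend on their choice. $\{\theta\}=\theta-\lfloor\theta\rfloor$. $K^0(X,T)=C(X,\mathbb Z)/\{f-f\circ T:f\in C(X,\mathbb Z)\}$, $[f]$ the class of $f$. *)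

(* Defs.v *)
From HB Require Import structures.
From mathcomp Require Import all_boot all_order all_algebra.
From mathcomp Require Import all_classical all_reals all_analysis.
Set Implicit Arguments. Unset Strict Implicit. Unset Printing Implicit Defensive.
Import Order.TTheory GRing.Theory Num.Theory.
Import numFieldNormedType.Exports.
Local Open Scope classical_set_scope.
Local Open Scope ring_scope.

Section CantorDefs.
Variables (R : realType) (X : pseudoMetricType R).

(* A Cantor set: nonempty, compact, Hausdorff, perfect, zero-dimensional,
   metrizable (X carries a metric structure). *)
Definition cantor_set : Prop := cantor_like X /\ [set: X] !=set0.

Definition homeo (T Tinv : X -> X) : Prop :=
  [/\ continuous T, continuous Tinv, cancel T Tinv & cancel Tinv T].

Definition zit (T Tinv : X -> X) (n : int) (x : X) : X :=
  match n with
  | Posz k => iter k T x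
  | Negz k => iter k.+1 Tinv x
  end.

Definition orbit (T Tinv : X -> X) (x : X) : set X :=
  [set y | exists n : int, y = zit T Tinv n x].

Definition minimal (T Tinv : X -> X) : Prop :=
  forall x, closure (orbit T Tinv x) = [set: X].

(* theta \in E(X,T): exp(2 pi i theta) is a continuous eigenvalue, i.e.
   there is a continuous f = (c, s) : X -> S^1 (S^1 the unit circle in R^2 = C)
   with f (T x) = exp(2 pi i theta) * f x (complex multiplication written out). *)
Definition eigen_angle (T : X -> X) (theta : R) : Prop :=
  exists c s : X -> R,
    [/\ continuous c, continuous s,
        (forall x, c x ^+ 2 + s x ^+ 2 = 1) &
        (forall x,
           c (T x) = cos (2 * pi * theta) * c x - sin (2 * pi * theta) * s x /\
           s (T x) = sin (2 * pi * theta) * c x + cos (2 * pi * theta) * s x)].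

(* continuity of an integer-valued function (Z with the discrete topology) *)
Definition cont_int (f : X -> int) : Prop :=
  forall k : int, open (f @^-1` [set k]).

Definition clopen_set (U : set X) : Prop := open U /\ closed U.

Definition int_coboundary (T : X -> X) (g : X -> int) : Prop :=
  exists h : X -> int, cont_int h /\ forall x, g x = h x - h (T x).

Definition real_coboundary (T : X -> X) (g : X -> R) : Prop :=
  exists F : X -> R, continuous F /\ forall x, g x = F x - F (T x).

Definition fracpart (t : R) : R := t - (Num.floor t)%:~R.

(* [g] = Theta(theta) in K^0(X,T):
   theta \in E(X,T), and for a clopen U with 1_U - {theta} a real coboundary,
   g - (floor(theta) 1_X + 1_U) is an integer coboundary. *)
Definition Theta_is (T : X -> X) (theta : R) (g : X -> int) : Prop :=
  eigen_angle T theta /\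
  exists U : set X,
    [/\ clopen_set U,
        real_coboundary T (fun x => \1_U x - fracpart theta) &
        int_coboundary T (fun x => g x - (Num.floor theta + \1_U x))].

Definition in_Theta_image (T : X -> X) (g : X -> int) : Prop :=
  exists theta : R, Theta_is T theta g.

End CantorDefs.

(* Main.v *)
Require Import Defs.
From HB Require Import structures.
From mathcomp Require Import all_boot all_order all_algebra.
From mathcomp Require Import all_classical all_reals all_analysis.
From mathcomp Require Import lra zify.
Import Order.TTheory GRing.Theory Num.Theory.
Import numFieldNormedType.Exports.
Local Open Scope classical_set_scope.
Local Open Scope ring_scope.

Section Trig.
Variable R : realType.

Lemma twopiE : 2 * pi = pi *+ 2 :> R.
Proof. by rewrite mulr_natl. Qed.

Lemma per_int (f : R -> R) (y : R) (z : int) : periodic f (pi *+ 2) ->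
  f (y + 2 * pi * z%:~R) = f y.
Proof.
move=> fp; case: z => k.
  change ((Posz k)%:~R) with (k%:R : R).
  by rewrite mulr_natr twopiE (periodicn fp).
rewrite NegzE rmorphN /= mulrN.
change ((Posz k.+1)%:~R) with (k.+1%:R : R).
have := periodicn fp k.+1 (y - 2 * pi * k.+1%:R).
by rewrite mulr_natr twopiE subrK.
Qed.

Lemma cos_int (y : R) (z : int) : cos (y + 2 * pi * z%:~R) = cos y.
Proof. exact/per_int/cosD2pi. Qed.
Lemma sin_int (y : R) (z : int) : sin (y + 2 * pi * z%:~R) = sin y.
Proof. exact/per_int/sinD2pi. Qed.

Lemma cos_eq1_small (r : R) : 0 <= r <= 1/2 -> cos (2 * pi * r) = 1 -> r = 0.
Proof.
move=> /andP[r0 r1] c1.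
have pi0 := @pi_gt0 R.
have : 2 * pi * r = 0.
  apply: cos_inj; rewrite ?cos0 // in_itv /=; last by rewrite lexx ltW.
  apply/andP; split; nra.


move=> /eqP; rewrite mulf_eq0 mulf_eq0 => /orP[/orP[]|/eqP//].
  by move=> /eqP; lra.
by move=> /eqP p0; move: pi0; rewrite p0 ltxx.
Qed.

Lemma cos_eq1 (u : R) : cos (2 * pi * u) = 1 -> exists z : int, u = z%:~R.
Proof.
move=> c1; exists (Num.floor u).
set r := u - (Num.floor u)%:~R.
have r0 : 0 <= r by rewrite subr_ge0 Num.Theory.floor_le.
have r1 : r < 1 by have := Num.Theory.floorD1_gt u; rewrite rmorphD /= /r; lra.
have cr : cos (2 * pi * r) = 1.
  rewrite /r mulrBr -mulrN -rmorphN /= cos_int //.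
case: (lerP r (1/2)) => rh.
  by have := @cos_eq1_small r; rewrite r0 rh => /(_ isT cr) /eqP; rewrite subr_eq0 => /eqP.
have : 1 - r = 0.
  apply: cos_eq1_small; first by apply/andP; split; lra.
  have -> : 2 * pi * (1 - r) = - (2 * pi * r) + 2 * pi * (1%:~R : int)%:~R.
    by rewrite mulrBr mulr1 addrC.
  by rewrite cos_int cosN.
lra.
Qed.
End Trig.

Section Topo.
Variables (R : realType) (X : pseudoMetricType R).

Lemma cont_int_lc (f : X -> int) : cont_int f -> forall x, \forall y \near x, f y = f x.
Proof.
move=> fc x; have := fc (f x); rewrite openE => /(_ x erefl).
by [].
Qed.

Lemma lc_cont_int (f : X -> int) : (forall x, \forall y \near x, f y = f x) -> cont_int f.
Proof.
move=> H k; rewrite openE => x /= fxk.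
by apply: filterS (H x) => y /= ->.
Qed.

Lemma lc_contR (f : X -> R) : (forall x, \forall y \near x, f y = f x) -> continuous f.
Proof. by move=> H x; apply: near_cst_continuous; exact: H. Qed.

Lemma cont_int_R (f : X -> int) : cont_int f -> continuous (fun x => (f x)%:~R : R).
Proof.
move=> /cont_int_lc H; apply: lc_contR => x.
by apply: filterS (H x) => y /= ->.
Qed.

Lemma cont_affine (F : X -> R) (a b : R) : continuous F ->
  continuous (fun x => a * (F x + b)).
Proof.
move=> Fc x; apply: cvgMl_tmp; apply: cvgD; [exact: Fc|exact: cvg_cst].
Qed.

Lemma cont_cos (F : X -> R) (a b : R) : continuous F ->
  continuous (fun x => cos (a * (F x + b))).
Proof.
move=> Fc x; apply: (continuous_comp (f := fun x => a * (F x + b)) (g := cos)).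
  exact: cont_affine.
exact: continuous_cos.
Qed.

Lemma cont_sin (F : X -> R) (a b : R) : continuous F ->
  continuous (fun x => sin (a * (F x + b))).
Proof.
move=> Fc x; apply: (continuous_comp (f := fun x => a * (F x + b)) (g := sin)).
  exact: cont_affine.
exact: continuous_sin.
Qed.

Lemma zit_inv (T Tinv : X -> X) (phi : X -> R) : homeo T Tinv ->
  (forall x, phi (T x) = phi x) -> forall n x, phi (zit T Tinv n x) = phi x.
Proof.
move=> [_ _ _ TK] H n x.
have Hi : forall z, phi (Tinv z) = phi z by move=> z; rewrite -{2}(TK z) H.
case: n => k /=.
  by elim: k => // k IH; rewrite iterS H.
elim: k => [|k IH]; first by rewrite /= Hi.
by rewrite iterS Hi.
Qed.

Lemma minimal_const (T Tinv : X -> X) (phi : X -> R) : homeo T Tinv ->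
  minimal T Tinv -> continuous phi ->
  (forall x, phi (T x) = phi x) -> forall x y, phi y = phi x.
Proof.
move=> hT mT pc H x y.
have cC : closed (phi @^-1` [set z | z = phi x]).
  by apply: preimage_closed; [move=> z _; exact: pc | exact: closed_eq].
have : Defs.orbit T Tinv x `<=` phi @^-1` [set z | z = phi x].
  by move=> z [n ->] /=; rewrite (@zit_inv T Tinv phi hT H).
move=> /closureS sub.
have e := (closure_id _).1 cC.
have := sub y; rewrite -e (mT x); apply.
by [].
Qed.

End Topo.

Section Approx.
Variables (R : realType) (X : pseudoMetricType R).

Lemma pattern_near (B : X -> set X) : (forall x, clopen (B x)) ->
  forall (s : seq X) y, \forall z \near y, forall x, x \in s -> (B x z <-> B x y).
Proof.
move=> cB; elim=> [|a s IH] y.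
  by apply: nearW => z x; rewrite in_nil.
have Ha : \forall z \near y, (B a z <-> B a y).
  case: (pselect (B a y)) => Bay.
    have : nbhs y (B a) by apply: open_nbhs_nbhs; split => //; case: (cB a).
    by apply: filterS => z Baz.
  have : nbhs y (~` B a).
    by apply: open_nbhs_nbhs; split => //; apply: closed_openC; case: (cB a).
  by apply: filterS => z Baz; split.
apply: filterS2 Ha (IH y) => z Hz Hs x; rewrite inE => /orP[/eqP->//|].
exact: Hs.
Qed.

Lemma approx_lc (F : X -> R) (d : R) :
  compact [set: X] -> hausdorff_space X -> zero_dimensional X ->
  continuous F -> 0 < d ->
  exists h : X -> int, cont_int h /\
    forall y, F y - d - 1 < (h y)%:~R /\ (h y)%:~R < F y + d.
Proof.
move=> cmp hs zd Fc d0.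
have exB : forall x, exists B : set X,
    [/\ clopen B, B x & forall y, B y -> `|F y - F x| < d].
  move=> x.
  have Hn : \forall t \near x, `|F t - F x| < d.
    by apply: cvgr_distC_lt => //; exact: Fc.
  have := zero_dimensional_cvg hs zd cmp Hn.
  by case=> D [Dx cD] sub; exists D; split.
have [B HB] := choice exB.
have cB : forall x, clopen (B x) by move=> x; case: (HB x).
have [s cov] : exists s : seq X, forall y, exists2 x, x \in s & B x y.
  pose FF : set_system (seq X) := filter_from [set: seq X]
    (fun s0 : seq X => [set s : seq X | {subset s0 <= s}]).
  have fF : Filter FF.
    apply: filter_from_filter; first by exists [::].
    move=> i j _ _; exists (i ++ j) => // t /= st; split => x xin; apply: st;
      by rewrite mem_cat xin ?orbT.
  have := (compact_near_coveringP _).1 cmp (seq X) FF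
    (fun s x' => exists2 x, x \in s & B x x') fF.
  case.
    move=> x _; exists (B x, [set s | x \in s]) => /=.
      split; first by apply: open_nbhs_nbhs; split; [case: (cB x)|case: (HB x)].
      by exists [:: x] => // t /= st; apply: st; rewrite inE.
    by case=> x' t /= [Bx' xt]; exists x.
  move=> s0 _ /= H; exists s0 => y; have := H s0 (fun x h => h) y I.
  by [].
pose a y := fun x => `[< B x y >].
pose h y := Num.floor (F (nth y s (find (a y) s))).
have has_y : forall y, has (a y) s.
  move=> y; have [x xD Bxy] := cov y.
  by apply/hasP; exists x => //; apply/asboolP.
exists h; split.
  apply: lc_cont_int => y.
  have := @pattern_near B cB s y; apply: filterS => z Hz.
  rewrite /h.
  have -> : find (a z) s = find (a y) s.
    apply: eq_in_find => x xs; rewrite /a.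
    by apply/asboolP/asboolP => /(Hz x xs).
  by rewrite (set_nth_default y) // -has_find.
move=> y.
have := nth_find y (has_y y); rewrite /a => /asboolP.
case: (HB (nth y s (find (a y) s))) => _ _ /[apply].
rewrite ltr_norml => /andP[l1 l2].
have f1 := Num.Theory.floor_le (F (nth y s (find (a y) s))).
have f2 := Num.Theory.floorD1_gt (F (nth y s (find (a y) s))).
rewrite rmorphD /= in f2.
rewrite /h; split; lra.
Qed.

End Approx.

Lemma indic_intr (R : realType) (T : Type) (U : set T) (x : T) :
  ((\1_U x : int)%:~R : R) = \1_U x.
Proof. by rewrite !indicE; case: (x \in U). Qed.

Theorem mainTheorem6 (R : realType) (X : pseudoMetricType R) (T Tinv : X -> X) :
  cantor_set X -> homeo T Tinv -> minimal T Tinv ->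
  forall (g : X -> int) (n : nat), (0 < n)%N -> cont_int g ->
    in_Theta_image T (fun x => g x *+ n) -> in_Theta_image T g.
Proof.
move=> [[_ cmp hs zd] [x0 _]] hT mT g n n0 gc.
case=> th [_ [U [cU [F0 [F0c HF0]] [h0 [h0c Hh0]]]]].
have Tc : continuous T by case: hT.
pose N : R := n%:R.
have N0 : N != 0 by rewrite /N pnatr_eq0 -lt0n.
pose th' := th / N.
pose F x := ((h0 x)%:~R + F0 x) / N.
have Fc : continuous F.
  move=> x; apply: cvgMr_tmp; apply: cvgD; [exact: cont_int_R|exact: F0c].
have key : forall x, (g x)%:~R - th' = F x - F (T x).
  move=> x.
  have e1 := congr1 (fun z : int => z%:~R : R) (Hh0 x).
  have e2 := HF0 x.
  rewrite /= !rmorphB /= !rmorphD /= rmorphMn /= -mulr_natr !indic_intr in e1.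
  rewrite /fracpart in e2.
  rewrite /F /th'.
  have e3 : ((h0 x)%:~R + F0 x) - ((h0 (T x))%:~R + F0 (T x)) = (g x)%:~R * N - th.
    rewrite /N; lra.
  by rewrite -mulrBl e3 mulrBl mulfK.
have FT : forall x, F (T x) = F x + th' + (- g x)%:~R.
  by move=> x; have := key x; rewrite rmorphN /=; lra.
have eig : eigen_angle T th'.
  exists (fun x => cos (2 * pi * (F x + 0))), (fun x => sin (2 * pi * (F x + 0))).
  split.
  - exact: cont_cos.
  - exact: cont_sin.
  - by move=> x; rewrite cos2Dsin2.
  - move=> x; rewrite FT.
    have -> : 2 * pi * (F x + th' + (- g x)%:~R + 0) =
       2 * pi * (F x + 0) + 2 * pi * th' + 2 * pi * (- g x)%:~R by lra.
    rewrite cos_int sin_int cosD sinD; split.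
    by rewrite [cos _ * cos _]mulrC [sin _ * sin _]mulrC.
    by rewrite addrC mulrC [sin (2 * pi * (F x + 0)) * _]mulrC.
pose k := Num.floor th'.
pose t := th' - k%:~R.
have t0 : 0 <= t by rewrite subr_ge0 Num.Theory.floor_le.
have t1 : t < 1 by have := Num.Theory.floorD1_gt th'; rewrite rmorphD /= /t; lra.
have key2 : forall x, (g x)%:~R - k%:~R - t = F x - F (T x).
  by move=> x; rewrite -key /t; lra.
exists th'; split => //.
have fr : fracpart th' = t by [].
rewrite fr; have [tp|tn] := ltrP 0 t; last first.
  (* t = 0 : minimality *)
  have te : t = 0 by lra.
  pose a := F x0.
  pose phi x := cos (2 * pi * (F x + - a)).
  have phic : continuous phi by exact: cont_cos.
  have phiT : forall x, phi (T x) = phi x.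
    move=> x; rewrite /phi.
    have -> : 2 * pi * (F (T x) + - a) = 2 * pi * (F x + - a) + 2 * pi * (k - g x)%:~R.
      have -> : F (T x) = F x + (k - g x)%:~R.
        by have := key2 x; rewrite rmorphB /= te; lra.
      lra.
    by rewrite cos_int.
  have Fint : forall x, exists z : int, F x - a = z%:~R.
    move=> x; apply: cos_eq1.
    have := @minimal_const R X T Tinv phi hT mT phic phiT x0 x.
    by rewrite /phi /a addrN mulr0 cos0.
  pose h x := Num.floor (F x - a).
  have hE : forall x, (h x)%:~R = F x - a.
    by move=> x; rewrite /h; have [z ->] := Fint x; rewrite intrKfloor.
  have hc : cont_int h.
    apply: lc_cont_int => x.
    have : \forall y \near x, `|F y - F x| < 1/2.
      by apply: cvgr_distC_lt => //; exact: Fc.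
    apply: filterS => y; rewrite ltr_norml => /andP[l1 l2].
    have e : ((h y - h x)%:~R : R) = F y - F x by rewrite rmorphB /= !hE; lra.
    have u1 : ((h y - h x)%:~R : R) < 1%:~R by rewrite e; lra.
    have u2 : ((-1)%:~R : R) < (h y - h x)%:~R by rewrite e; rewrite rmorphN /=; lra.
    rewrite ltr_int in u1; rewrite ltr_int in u2.
    lia.
  exists set0; split.
  - by split; [exact: open0 | exact: closed0].
  - exists (fun=> 0); split; first by move=> x; exact: cvg_cst.
    by move=> x; rewrite indicE in_set0 te.
  - exists h; split => // x; rewrite indicE in_set0 addr0.
    apply: (@intr_inj R); rewrite !rmorphB /= !hE.
    by have := key2 x; rewrite te; lra.
pose d := t * (1 - t) / 2.
have d0 : 0 < d by rewrite /d; apply: divr_gt0 => //; apply: mulr_gt0; lra.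
have dt : 2 * d < t by rewrite /d; nra.
have dt' : t + 2 * d < 1 by rewrite /d; nra.
have [h [hc hb]] := @approx_lc R X F d cmp hs zd Fc d0.
pose D x := g x - k - (h x - h (T x)).
have DR : forall x, ((D x)%:~R : R) = t + (F x - (h x)%:~R) - (F (T x) - (h (T x))%:~R).
  by move=> x; rewrite /D !rmorphB /=; have := key2 x; lra.
have D01 : forall x, D x = 0 \/ D x = 1.
  move=> x; have [l1 l2] := hb x; have [l3 l4] := hb (T x).
  have u1 : ((D x)%:~R : R) < 2%:~R by rewrite DR; lra.
  have u2 : ((-1)%:~R : R) < (D x)%:~R by rewrite DR; lra.
  rewrite ltr_int in u1; rewrite ltr_int in u2; lia.
have hTc : forall x, \forall y \near x, h (T y) = h (T x).
  by move=> x; exact: ((Tc x) _ (@cont_int_lc R X h hc (T x))).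
have Dc : forall x, \forall y \near x, D y = D x.
  move=> x; have := @cont_int_lc R X g gc x; have := @cont_int_lc R X h hc x.
  apply: filterS3 (hTc x) => y e1 e2 e3; by rewrite /D e1 e2 e3.
have Dci := @lc_cont_int R X D Dc.
pose V := [set x | D x = 1].
have VD : forall x, (\1_V x : int) = D x.
  move=> x; rewrite indicE; case: (D01 x) => e.
    by rewrite e memNset // /V /= e.
  by rewrite e mem_set // /V /= e.
exists V; split.
- split; first exact: Dci.
  have -> : V = ~` [set x | D x = 0].
    apply/seteqP; split => x /=; rewrite /V /=.
      by move=> ->.
    by case: (D01 x).
  exact/open_closedC/Dci.
- exists (fun x => F x - (h x)%:~R); split.
    by move=> x; apply: cvgB; [exact: Fc | exact: cont_int_R].
  by move=> x; rewrite -indic_intr VD DR; lra.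
- exists h; split => // x; rewrite VD /D; lia.
Qed.
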